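(* Let $p$ be a prime. Then $\mathcal{M}_p^{(0)}\subseteq\{1,2,6,42,1806\}$.
   Context: For positive integers $k,n$ let $S_k(n)=\sum_{i=1}^{n} i^k$. For an integer $a$, $\mathcal{M}_a$ denotes the set of positive integers $n$ such that $S_n(n)\equiv a\pmod{n}$. For a prime $p$, $\mathcal{M}_p^{(0)}=\{n\in\mathcal{M}_p : p\nmid n\}$. *)

(* Defs.v *)
From mathcomp Require Import all_boot.

Definition S (k n : nat) : nat := \sum_(1 <= i < n.+1) i ^ k.

Definition inM (a n : nat) : Prop := 0 < n /\ S n n = a %[mod n].

Definition inM0 (p n : nat) : Prop := inM p n /\ ~~ (p %| n).

(* Main.v *)
Require Import Defs.
From mathcomp Require Import all_boot all_algebra all_fingroup all_solvable all_field.
Import GRing.Theory FinRing.Theory.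
Local Open Scope ring_scope.

Lemma sum_pow_zero (q n : nat) : prime q -> ~~ (q.-1 %| n)%N ->
  \sum_(x : 'F_q) x ^+ n = 0.
Proof.
move=> pq nd.
have cyc := field_unit_group_cyclic [set: {unit 'F_q}]%G.
case/cyclicP: cyc => g Hg.
have og : #[g]%g = q.-1.
  by rewrite /order -Hg card_finField_unit card_Fp.
set a := val g.
have an : a ^+ n != 1.
  apply: contra nd => /eqP H; rewrite -og order_dvdn; apply/eqP; apply: val_inj.
  by rewrite val_unitX H.
have a0 : a != 0 by rewrite -unitfE; exact: valP.
set T := \sum_(x : 'F_q) x ^+ n.
have ET : T = a ^+ n * T.
  rewrite /T mulr_sumr (reindex_inj (mulfI a0)) /=.
  by apply: eq_bigr => x _; rewrite exprMn.
have : (a ^+ n - 1) * T = 0 by rewrite mulrBl mul1r -ET subrr.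
by move/eqP; rewrite mulf_eq0 subr_eq0 (negbTE an) => /eqP.
Qed.

Lemma big_periodic (R : nzRingType) (g : nat -> R) (q m : nat) :
  (forall i k, g (i + q * k)%N = g i) ->
  \sum_(0 <= i < q * m) g i = m%:R * \sum_(0 <= i < q) g i.
Proof.
move=> per; elim: m => [|m IH]; first by rewrite muln0 big_geq // mul0r.
rewrite (big_cat_nat _ (n := (q * m)%N)) //=; last by rewrite leq_mul2l leqnSn orbT.
rewrite IH -{1}(add0n (q * m)%N) big_addn mulnS addnK mulrSr mulrDl mul1r.
congr (_ + _); apply: eq_bigr => i _; exact: per.
Qed.

Lemma sum_Fq (q n : nat) : prime q ->
  \sum_(x : 'F_q) x ^+ n = \sum_(0 <= i < q) (i%:R : 'F_q) ^+ n.
Proof.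
move=> pq.
set f := fun i : nat => (i%:R : 'F_q) ^+ n.
have -> : \sum_(x : 'F_q) x ^+ n = \sum_(0 <= i < (Zp_trunc (pdiv q)).+2) f i.
  rewrite big_mkord; apply: eq_bigr => i _; by rewrite /f natr_Zp.
exact: (congr1 (fun Q => \sum_(0 <= i < Q) f i) (Fp_cast pq)).
Qed.



Lemma key (q n : nat) : prime q -> (0 < n)%N -> (q %| n)%N -> ~~ (q %| S n n)%N ->
  (q.-1 %| n)%N && ~~ (q * q %| n)%N.
Proof.
move=> pq n0 qn nS.
have chF : q \in [pchar 'F_q] := pchar_Fp pq.
have natF k : (q %| k)%N = ((k%:R : 'F_q) == 0) := dvdn_pcharf chF k.
set f := fun i : nat => (i%:R : 'F_q) ^+ n.
have eS : (S n n)%:R = \sum_(0 <= i < n) f i.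
  rewrite /S natr_sum.
  have := @big_ltn _ 0 +%R 0%N n.+1 f (ltn0Sn n).
  rewrite (big_nat_recr _ _ _ (leq0n n)) /= => E.
  have f0 : f 0%N = 0 by rewrite /f expr0n eqn0Ngt n0.
  have fn : f n = 0 by rewrite /f (eqP (_ : (n%:R : 'F_q) == 0)) ?expr0n ?eqn0Ngt ?n0 // -natF.
  rewrite fn addr0 f0 add0r in E; rewrite E.
  by apply: eq_bigr => i _; rewrite natrX.
set m := (n %/ q)%N.
have nm : n = (q * m)%N by rewrite mulnC divnK.
have eS2 : (S n n)%:R = m%:R * \sum_(x : 'F_q) x ^+ n.
  rewrite eS sum_Fq // -big_periodic; first by rewrite -nm.
  move=> i k; rewrite /f natrD natrM.
  by rewrite (eqP (_ : (q%:R : 'F_q) == 0)) ?mul0r ?addr0 // -natF.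
apply/andP; split.
  apply: contraR nS => nd; rewrite natF eS2 sum_pow_zero // mulr0 //.
apply: contra nS => qq; rewrite natF eS2.
have : (q %| m)%N by rewrite /m dvdn_divRL.
by rewrite natF => /eqP ->; rewrite mul0r.
Qed.
Local Close Scope ring_scope.
Definition Lst := [:: 1; 2; 6; 42; 1806].
Lemma stepc : all (fun m => all (fun d => prime d.+1 ==> ~~ (d.+1 %| m) ==> (d.+1 * m \in Lst)) (divisors m)) Lst.
Proof. vm_compute. reflexivity. Qed.

Lemma pred_pos r : 1 < r -> 0 < r.-1. Proof. by case: r => [|[]]. Qed.
Lemma pred_lt r q : 1 < r -> r <= q -> r.-1 < q. Proof. by case: r. Qed.
Lemma cop_small q r : prime q -> 0 < r -> r < q -> coprime r q.
Proof. move=> pq r0 rq; rewrite coprime_sym prime_coprime // gtnNdvd //. Qed.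

Lemma step4 n : 0 < n ->
  (forall r, prime r -> r %| n -> (r.-1 %| n) && ~~ (r * r %| n)) -> n \in Lst.
Proof.
elim: n {-2}n (leqnn n) => [|N IH] n; first by rewrite leqn0 => /eqP ->.
move=> nN n0 P.
case: (ltngtP n 1) => [|n1|->]; [by rewrite ltnNge n0|  | by []].
set q := max_pdiv n.
have pq : prime q by exact: max_pdiv_prime.
have q1 := prime_gt1 pq.
have qn : q %| n by exact: max_pdiv_dvd.
set m := n %/ q.
have nm : n = m * q by rewrite divnK.
have m0 : 0 < m by move: n0; rewrite nm muln_gt0 => /andP[].
have mn : m < n by rewrite nm -{1}(muln1 m) ltn_pmul2l.
have [_ nqq] := andP (P q pq qn).
have qm : ~~ (q %| m) by move: nqq; rewrite nm dvdn_pmul2r // ltnW.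
have Pm : forall r, prime r -> r %| m -> (r.-1 %| m) && ~~ (r * r %| m).
  move=> r pr rm.
  have rn : r %| n by rewrite nm dvdn_mulr.
  have [r1n nrr] := andP (P r pr rn).
  have rq : r <= q by apply: max_pdiv_max; rewrite mem_primes pr n0 rn.
  have rq' : r < q.
    rewrite ltn_neqAle rq andbT; apply/eqP => E; by rewrite -E rm in qm.
  have r1 := prime_gt1 pr.
  apply/andP; split.
    move: r1n; rewrite nm Gauss_dvdl //; apply: cop_small => //; [exact: pred_pos | exact: pred_lt].
  apply: contra nrr => H; rewrite nm; exact: dvdn_mulr.
have mL : m \in Lst.
  apply: IH; [ | exact: m0 | exact: Pm]. rewrite -ltnS; exact: leq_trans mn nN.
have [q1n _] := andP (P q pq qn).
have q1m : q.-1 %| m.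
  move: q1n; rewrite nm Gauss_dvdl //; apply: cop_small => //; [exact: pred_pos | exact: pred_lt].
have H := allP stepc m mL.
move/allP: H => /(_ q.-1).
rewrite -dvdn_divisors // => /(_ q1m).
rewrite prednK; last exact: ltnW.
rewrite pq qm implyTb implyTb.
move=> H; rewrite nm mulnC; exact: H.
Qed.

Theorem mainTheorem2 (p n : nat) :
  prime p -> inM0 p n -> n \in [:: 1; 2; 6; 42; 1806].
Proof.
move=> pp [[n0 E] pn].
change (n \in Lst); apply: (step4 n n0) => r pr rn; apply: key => //.
apply: contra pn => rS.
have : (r %| p)%N.
  by rewrite /dvdn -(modn_dvdm p rn) -E (modn_dvdm _ rn).
by rewrite dvdn_prime2 // => /eqP <-.
Qed.
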